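(* For every graph $G$, $\operatorname{box}(G)\le \min\{2\,MED(G)+2,\ MED(\overline{G})\}$, where $\overline{G}$ is the complement of $G$.
   Context: A dominating edge set of a graph $H$ is a set $D$ of edges such that every edge of $H$ not in $D$ shares an endpoint with some edge of $D$; $MED(H)$ is the minimum cardinality of a dominating edge set of $H$. The boxicity $\operatorname{box}(G)$ is the minimum $b$ such that $G$ is the intersection graph of axis-parallel boxes in $\mathbb{R}^b$ (products of $b$ closed intervals), one box per vertex. *)

(* Defs.v *)
From mathcomp Require Import all_boot all_order all_algebra.
From mathcomp Require Import reals.
Set Implicit Arguments. Unset Strict Implicit. Unset Printing Implicit Defensive.
Import Order.TTheory GRing.Theory Num.Theory.

Definition simple_graph (T : finType) (e : rel T) :=
  symmetric e /\ irreflexive e.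

Definition compl_graph (T : finType) (e : rel T) : rel T :=
  fun x y => (x != y) && ~~ e x y.

Definition edges (T : finType) (e : rel T) : {set {set T}} :=
  [set E : {set T} | [exists x, exists y, e x y && (E == [set x; y])]].

Definition share_endpoint (T : finType) (E F : {set T}) : bool :=
  ~~ [disjoint E & F].

Definition dominating_edge_set (T : finType) (e : rel T) (D : {set {set T}}) : bool :=
  (D \subset edges e) &&
  [forall F in edges e, (F \in D) || [exists E in D, share_endpoint E F]].

(* MED(H): minimum cardinality of a dominating edge set
   (the full edge set is dominating, so the default value is attained). *)
Definition MED (T : finType) (e : rel T) : nat :=
  \big[minn/#|edges e|]_(D : {set {set T}} | dominating_edge_set e D) #|D|.

(* Box representation in R^b: vertex x gets the box
   prod_{i < b} [lo x i, hi x i] (closed, nonempty intervals), and distinct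
   vertices are adjacent iff their boxes intersect. *)
Definition box_rep (R : realType) (T : finType) (e : rel T) (b : nat) : Prop :=
  exists (lo hi : T -> 'I_b -> R),
    (forall x i, (lo x i <= hi x i)%R) /\
    (forall x y, x != y ->
       (e x y <-> forall i, ((lo x i <= hi y i)%R && (lo y i <= hi x i)%R))).

(* box(G) <= k, i.e. the minimum dimension b admitting a box representation
   is at most k; equivalently some b <= k admits a box representation. *)
Definition boxicity_le (R : realType) (T : finType) (e : rel T) (k : nat) : Prop :=
  exists b, (b <= k)%N /\ box_rep R e b.

(* Main.v *)
Require Import Defs.
From mathcomp Require Import all_boot all_order all_algebra.
From mathcomp Require Import reals.
Import Order.TTheory GRing.Theory Num.Theory.
Definition ninter (p q : nat * nat) := ((p.1 <= q.2) && (q.1 <= p.2))%N.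

Lemma rep_from_seq (R : realType) (T : finType) (e : rel T) (A : eqType)
  (s : seq A) (g : A -> T -> nat * nat) :
  (forall a, a \in s -> forall x, ((g a x).1 <= (g a x).2)%N) ->
  (forall a, a \in s -> forall x y, x != y -> e x y -> ninter (g a x) (g a y)) ->
  (forall x y, x != y -> ~~ e x y -> exists2 a, a \in s & ~~ ninter (g a x) (g a y)) ->
  box_rep R e (size s).
Proof.
move=> H1 H2 H3.
pose G (i : 'I_(size s)) (x : T) : nat * nat :=
  match nth None (map Some s) i with Some a => g a x | None => (0, 0)%N end.
have HG : forall i : 'I_(size s), exists2 a, a \in s & forall x, G i x = g a x.
  move=> i; have : nth None (map Some s) i \in map Some s.
    by apply: mem_nth; rewrite size_map.
  case/mapP => a ain Ha; exists a => // x; by rewrite /G Ha.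
exists (fun x i => (((G i x).1)%:R)%R : R), (fun x i => (((G i x).2)%:R)%R : R); split.
  move=> x i; rewrite ler_nat; have [a ain ->] := HG i; exact: H1.
move=> x y xy; split.
  move=> exy i; rewrite !ler_nat; have [a ain Ha] := HG i; rewrite !Ha.
  exact: H2.
move=> Hall; apply/negPn/negP => nexy.
have [a ain Hn] := H3 x y xy nexy.
have Hi : (index a s < size s)%N by rewrite index_mem.
have := Hall (Ordinal Hi); rewrite !ler_nat /G /=.
rewrite (nth_map a) // nth_index //.
by move=> Hc; move/negP: Hn; apply.
Qed.

Lemma MED_attained (T : finType) (e : rel T) :
  exists2 D, dominating_edge_set e D & #|D| = MED e.
Proof.
rewrite /MED; apply: (big_ind (fun m => exists2 D, dominating_edge_set e D & #|D| = m)).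
- exists (edges e) => //; apply/andP; split => //.
  by apply/forall_inP => F ->.
- move=> a b [D1 H1 E1] [D2 H2 E2]; case: (leqP a b) => h.
    by exists D1.
  by exists D2.
- by move=> D HD; exists D.
Qed.
Set Implicit Arguments. Unset Strict Implicit. Unset Printing Implicit Defensive.
Definition gpair (T : finType) (e : rel T) (p : T * T) (w : T) : nat * nat :=
  if w == p.1 then (0, 0) else if w == p.2 then (3, 3)
  else ((if e w p.1 then 0 else 1), (if e w p.2 then 3 else 2)).

Lemma ninterC p q : ninter p q = ninter q p.
Proof. by rewrite /ninter andbC. Qed.

Lemma gpair_proper (T : finType) (e : rel T) p x : (gpair e p x).1 <= (gpair e p x).2.
Proof. rewrite /gpair; by do 2 case: ifP => //; case: (e x _); case: (e x _). Qed.

Lemma gpair_super (T : finType) (e : rel T) u v : symmetric e -> compl_graph e u v ->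
  forall x y, x != y -> e x y -> ninter (gpair e (u, v) x) (gpair e (u, v) y).
Proof.
move=> sym /andP [uv neuv].
have key : forall x y, x != y -> e x y -> x == u -> ninter (gpair e (u, v) x) (gpair e (u, v) y).
  move=> x y xy exy /eqP Ex; subst x; rewrite /gpair /= eqxx.
  rewrite eq_sym (negbTE xy); case: eqP => [Ey|_]; first by subst y; rewrite exy in neuv.
  by rewrite sym exy.
have key2 : forall x y, x != y -> e x y -> x == v -> ninter (gpair e (u, v) x) (gpair e (u, v) y).
  move=> x y xy exy /eqP Ex; subst x; rewrite /gpair /= eqxx eq_sym (negbTE uv).
  case: eqP => [Ey|_]; first by subst y; rewrite sym exy in neuv.
  rewrite (eq_sym y v) (negbTE xy) (sym y v) exy. by case: (e y u).
move=> x y xy exy.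
case: (boolP (x == u)) => xu; first exact: key.
case: (boolP (x == v)) => xv; first exact: key2.
case: (boolP (y == u)) => yu; first by rewrite ninterC; apply: key; rewrite // 1?eq_sym // sym.
case: (boolP (y == v)) => yv; first by rewrite ninterC; apply: key2; rewrite // 1?eq_sym // sym.
rewrite /gpair /= (negbTE xu) (negbTE xv) (negbTE yu) (negbTE yv).
by case: (e x u); case: (e x v); case: (e y u); case: (e y v).
Qed.

Lemma gpair_sep (T : finType) (e : rel T) u v : symmetric e -> compl_graph e u v ->
  forall x y, x != y -> ~~ e x y -> (x == u) || (x == v) ->
  ~~ ninter (gpair e (u, v) x) (gpair e (u, v) y).
Proof.
move=> sym /andP [uv neuv] x y xy nexy /orP [] /eqP Ex; subst x.
  rewrite /gpair /= eqxx eq_sym (negbTE xy); case: eqP => // _.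
  by rewrite sym (negbTE nexy).
rewrite /gpair /= eqxx eq_sym (negbTE uv); case: eqP => // _.
by rewrite (eq_sym y v) (negbTE xy) (sym y v) (negbTE nexy).
Qed.
Lemma bound1 (R : realType) (T : finType) (e : rel T) : simple_graph e ->
  forall D, dominating_edge_set (compl_graph e) D -> exists2 b, b <= #|D| & box_rep R e b.
Proof.
move=> [sym irr] D /andP [sub dom].
pose h (E : {set T}) := [pick p : T * T | (E == [set p.1; p.2]) && compl_graph e p.1 p.2].
pose s := pmap h (enum D).
exists (size s); first by rewrite size_pmap cardE; exact: count_size.
have Hs : forall a, a \in s -> compl_graph e a.1 a.2.
  move=> a; rewrite mem_pmap => /mapP [E _ Ha]; move: Ha; rewrite /h.
  by case: pickP => [p /andP [_ c] [->] | _ //].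
apply: (@rep_from_seq R T e _ s (gpair e)).
- by move=> a _ x; exact: gpair_proper.
- by move=> [u v] /Hs /= c; apply: gpair_super.
move=> x y xy nexy.
have F : [set x; y] \in edges (compl_graph e).
  rewrite inE; apply/existsP; exists x; apply/existsP; exists y.
  by rewrite /compl_graph xy nexy eqxx.
have [E ED Exy] : exists2 E, E \in D & (x \in E) || (y \in E).
  move/forall_inP: dom => /(_ _ F) /orP [FD|/exists_inP [E ED sh]].
    by exists [set x; y]; rewrite // set21.
  exists E => //; apply/negPn/negP => H; move: sh; rewrite /share_endpoint.
  move/negP; apply; apply/pred0P => z /=; apply/negbTE/negP => /andP [zE].
  by rewrite !inE => /orP [] /eqP Ez; subst z; rewrite zE ?orbT in H.
have := subsetP sub E ED; rewrite inE.
move=> /existsP [u /existsP [v /andP [cuv /eqP EE]]].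
case Hp: (h E) => [p|]; last first.
  move: Hp; rewrite /h; case: pickP => // none _.
  by move: (none (u, v)); rewrite /= EE eqxx cuv.
have [Ep cp] : E = [set p.1; p.2] /\ compl_graph e p.1 p.2.
  move: (Hp); rewrite /h; case: pickP => // p' /andP [/eqP Ep cp] [Epp].
  by subst p'.
have ps : p \in s.
  by rewrite mem_pmap; apply/mapP; exists E; rewrite ?mem_enum // /h Hp.
exists p => //; case: p Ep cp Hp ps => [u' v'] /= Ep cp _ _.
rewrite Ep !inE in Exy; case/orP: Exy => Hx.
  by apply: gpair_sep.
rewrite ninterC; apply: gpair_sep => //; by rewrite 1?eq_sym // sym.
Qed.
Definition gsing (T : finType) (e : rel T) (s w : T) : nat * nat :=
  if w == s then (0, 0) else if e w s then (0, 1) else (1, 1).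

Definition gind (T : finType) (S : {set T}) (w : T) : nat * nat :=
  if w \in S then (0, #|T|) else (enum_rank w : nat, enum_rank w : nat).

Definition gopt (T : finType) (e : rel T) (S : {set T}) (o : option T) : T -> nat * nat :=
  match o with Some s => gsing e s | None => gind S end.

Lemma bound2 (R : realType) (T : finType) (e : rel T) : simple_graph e ->
  forall D, dominating_edge_set e D -> exists2 b, b <= 2 * #|D| + 2 & box_rep R e b.
Proof.
move=> [sym irr] D /andP [sub dom].
pose S := \bigcup_(E in D) E.
have cardS : #|S| <= 2 * #|D|.
  have : #|S| <= \sum_(E in D) 2.
    apply: (big_ind2 (fun (A : {set T}) n => #|A| <= n)).
    - by rewrite cards0.
    - move=> A1 n1 A2 n2 h1 h2; exact: leq_trans (leq_card_setU A1 A2) (leq_add h1 h2).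
    - move=> E ED; have := subsetP sub E ED; rewrite inE.
      by case/existsP => x /existsP [y /andP [_ /eqP ->]]; rewrite cards2; case: (x != y).
  by rewrite sum_nat_const mulnC.
have cover : forall x y, e x y -> (x \in S) || (y \in S).
  move=> x y exy.
  have xy : x != y by apply/eqP => Exy; subst y; rewrite irr in exy.
  have F : [set x; y] \in edges e.
    by rewrite inE; apply/existsP; exists x; apply/existsP; exists y; rewrite exy eqxx.
  move/forall_inP: dom => /(_ _ F) /orP [FD|/exists_inP [E ED sh]].
    by apply/orP; left; apply/bigcupP; exists [set x; y]; rewrite // set21.
  case/pred0Pn: sh => z /andP [zE]; rewrite !inE => /orP [] /eqP Ez; subst z.
    by apply/orP; left; apply/bigcupP; exists E.
  by apply/orP; right; apply/bigcupP; exists E.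
pose s := None :: map Some (enum S).
exists (size s); first by rewrite /= size_map -cardE addn2 ltnS leqW.
apply: (@rep_from_seq R T e _ s (gopt e S)).
- move=> [a|] _ x /=; rewrite /gsing /gind.
    by case: ifP => //; case: ifP.
  by case: ifP.
- move=> [a|] _ x y xy exy /=.
    rewrite /gsing; case: (eqVneq x a) => [Ex|xa].
      by subst a; rewrite eq_sym (negbTE xy) sym exy.
    case: (eqVneq y a) => [Ey|ya].
      by subst a; rewrite exy; case: (e x y).
    by case: (e x a); case: (e y a).
  rewrite /gind /ninter.
  have ltx := ltn_ord (enum_rank x); have lty := ltn_ord (enum_rank y).
  case/orP: (cover x y exy) => H; rewrite H; case: ifP => _ /=;
    by rewrite ?leq0n ?(ltnW ltx) ?(ltnW lty) ?leqnn.
move=> x y xy nexy.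
have sep : forall u v, u != v -> ~~ e u v -> ~~ ninter (gsing e u u) (gsing e u v).
  move=> u v uv neuv; rewrite /gsing eqxx eq_sym (negbTE uv).
  by rewrite sym (negbTE neuv).
case: (boolP (x \in S)) => xS.
  exists (Some x); first by rewrite inE; apply/orP; right; rewrite mem_map ?mem_enum //; move=> ? ? [].
  exact: sep.
case: (boolP (y \in S)) => yS.
  exists (Some y); first by rewrite inE; apply/orP; right; rewrite mem_map ?mem_enum //; move=> ? ? [].
  by rewrite /= ninterC; apply: sep; rewrite 1?eq_sym // sym.
exists None; first by rewrite inE eqxx.
rewrite /= /gind (negbTE xS) (negbTE yS) /ninter /=.
apply/negP => /andP [h1 h2]; move/negP: xy; apply; apply/eqP.
apply: enum_rank_inj; apply: val_inj; apply/anti_leq; by rewrite h1 h2.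
Qed.

Theorem theorem17 (R : realType) (T : finType) (e : rel T) :
  simple_graph e ->
  boxicity_le R e (minn (2 * MED e + 2) (MED (compl_graph e))).
Proof.
move=> Hs.
have [D1 HD1 E1] := @MED_attained T (compl_graph e).
have [D2 HD2 E2] := @MED_attained T e.
have [b1 Hb1 R1] := @bound1 R T e Hs D1 HD1.
have [b2 Hb2 R2] := @bound2 R T e Hs D2 HD2.
rewrite E1 in Hb1; rewrite E2 in Hb2.
case: (leqP (MED (compl_graph e)) (2 * MED e + 2)) => h.
  exists b1; split => //; rewrite leq_min Hb1 andbT; exact: leq_trans Hb1 h.
exists b2; split => //; rewrite leq_min Hb2 /=; exact: leq_trans Hb2 (ltnW h).
Qed.
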